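(* If a formula $\varphi(x)$ of the correspondence language is logically equivalent to $ST_{22}(I,x)$ for some modal intuitionistic formula $I$, then $\varphi(x)$ is invariant with respect to $(2,2)$-modal asimulations.
   Context: Correspondence language: classical first-order logic without identity over $\Sigma=\{R,R_\Box,R_\Diamond,P_1,P_2,\dots\}$ ($R,R_\Box,R_\Diamond$ binary, $P_n$ unary); $\varphi(x)$ has only $x$ free. $\Theta$ is a subset of $\Sigma$ containing $R,R_\Box,R_\Diamond$; $\Theta$-models $M_k=\langle U_k,\iota_k\rangle$, with $R_k=\iota_k(R)$, $R_{\Box k}=\iota_k(R_\Box)$, $R_{\Diamond k}=\iota_k(R_\Diamond)$. $\Sigma_\varphi=\{R,R_\Box,R_\Diamond\}\cup\{P_n:P_n\text{ occurs in }\varphi\}$. $a\models_k\varphi(x)$ means $\varphi$ holds in $M_k$ under assignments sending $x$ to $a$. $s\overset{\leftrightarrow}{A}t$ means $sAt$ and $tAs$. Modal intuitionistic formulas: built from $p_n,\bot$ with $\wedge,\vee,\to,\Box,\Diamond$. $ST_{22}(p_n,x)=P_n(x)$, $ST_{22}(\bot,x)=\bot$, commutes with $\wedge,\vee$; $ST_{22}(I\to J,x)=\forall y(R(x,y)\to(ST_{22}(I,y)\to ST_{22}(J,y)))$; $ST_{22}(\Box I,x)=\forall y(R(x,y)\to\forall z(R_\Box(y,z)\to ST_{22}(I,z)))$; $ST_{22}(\Diamond I,x)=\forall y(R(x,y)\to\exists z(R_\Diamond(y,z)\wedge ST_{22}(I,z)))$. A $(2,2)$-modal $\langle(M_1,t),(M_2,u)\rangle$-asimulation,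 for pointed $\Theta$-models, is a pair $(A,B)$ with $A,B\subseteq(U_1\times U_2)\cup(U_2\times U_1)$ such that $tAu$ and, for all $i,j\in\{1,2\}$, $a,c,e\in U_i$, $b,d,f\in U_j$, unary $P\in\Theta$: if $aAb$ and $a\models_iP(x)$ then $b\models_jP(x)$; if $aAb$, $bR_jd$ then some $c\in U_i$ has $aR_ic$ and $c\overset{\leftrightarrow}{A}d$; if $aAb$, $bR_jd$, $dR_{\Box j}f$ then some $c,e\in U_i$ have $aR_ic$, $cR_{\Box i}e$, $eAf$; if $aAb$, $bR_jd$ then some $c\in U_i$ has $aR_ic$ and $cBd$; if $aBb$, $aR_{\Diamond i}c$ then some $d\in U_j$ has $bR_{\Diamond j}d$ and $cAd$. $\varphi(x)$ is invariant with respect to $(2,2)$-modal asimulations iff for every $\Theta\supseteq\Sigma_\varphi$, all pointed $\Theta$-models $(M_1,t),(M_2,u)$, every such $(A,B)$, and all $a\in U_1,b\in U_2$ with $aAb$: $a\models_1\varphi(x)$ implies $b\models_2\varphi(x)$. *)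

(* Defs.v *)
From Stdlib Require Import List.

(* Individual variables are natural numbers; P_n is encoded by its index n. No identity. *)
Inductive fo : Type :=
| FR    : nat -> nat -> fo
| FRbox : nat -> nat -> fo
| FRdia : nat -> nat -> fo
| FP    : nat -> nat -> fo          (* P_n(v)       *)
| FBot  : fo
| FTop  : fo
| FNot  : fo -> fo
| FAnd  : fo -> fo -> fo
| FOr   : fo -> fo -> fo
| FImp  : fo -> fo -> fo
| FAll  : nat -> fo -> fo
| FEx   : nat -> fo -> fo.

Fixpoint free (v : nat) (f : fo) : Prop :=
  match f with
  | FR a b | FRbox a b | FRdia a b => v = a \/ v = b
  | FP _ a => v = a
  | FBot | FTop => False
  | FNot g => free v g
  | FAnd g h | FOr g h | FImp g h => free v g \/ free v h
  | FAll w g | FEx w g => v <> w /\ free v g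
  end.

Definition only_free (f : fo) (x : nat) : Prop := forall v, free v f -> v = x.

Fixpoint occursP (n : nat) (f : fo) : Prop :=
  match f with
  | FP m _ => n = m
  | FR _ _ | FRbox _ _ | FRdia _ _ | FBot | FTop => False
  | FNot g | FAll _ g | FEx _ g => occursP n g
  | FAnd g h | FOr g h | FImp g h => occursP n g \/ occursP n h
  end.

(* A Theta-model (Theta a set of
   unary predicate indices) is represented by such a structure in which the interpretations
   of the P_n with n outside Theta are irrelevant. *)
Record model : Type := Model {
  U    : Type;
  Rm   : U -> U -> Prop;
  Rbox : U -> U -> Prop;
  Rdia : U -> U -> Prop;
  Pm   : nat -> U -> Prop }.

Definition upd {M : model} (g : nat -> U M) (v : nat) (a : U M) : nat -> U M :=
  fun w => if Nat.eqb w v then a else g w.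

Fixpoint sat (M : model) (g : nat -> U M) (f : fo) : Prop :=
  match f with
  | FR a b => Rm M (g a) (g b)
  | FRbox a b => Rbox M (g a) (g b)
  | FRdia a b => Rdia M (g a) (g b)
  | FP n a => Pm M n (g a)
  | FBot => False
  | FTop => True
  | FNot h => ~ sat M g h
  | FAnd h k => sat M g h /\ sat M g k
  | FOr h k => sat M g h \/ sat M g k
  | FImp h k => sat M g h -> sat M g k
  | FAll v h => forall a : U M, sat M (upd g v a) h
  | FEx v h => exists a : U M, sat M (upd g v a) h
  end.

Definition sat_at (M : model) (a : U M) (f : fo) (x : nat) : Prop :=
  forall g : nat -> U M, g x = a -> sat M g f.

Definition log_equiv (f h : fo) : Prop :=
  forall (M : model) (g : nat -> U M), sat M g f <-> sat M g h.

Inductive mi : Type :=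
| Mp   : nat -> mi
| MBot : mi
| MAnd : mi -> mi -> mi
| MOr  : mi -> mi -> mi
| MImp : mi -> mi -> mi
| MBox : mi -> mi
| MDia : mi -> mi.

(* ST_22(I, x); bound variables y := x+1, z := x+2 (fresh w.r.t. x; each ST22 I v
   has only v free, so this choice is hygienic). *)
Fixpoint ST22 (F : mi) (x : nat) : fo :=
  match F with
  | Mp n => FP n x
  | MBot => FBot
  | MAnd F1 F2 => FAnd (ST22 F1 x) (ST22 F2 x)
  | MOr F1 F2 => FOr (ST22 F1 x) (ST22 F2 x)
  | MImp F1 F2 =>
      FAll (S x) (FImp (FR x (S x)) (FImp (ST22 F1 (S x)) (ST22 F2 (S x))))
  | MBox F1 =>
      FAll (S x) (FImp (FR x (S x))
        (FAll (S (S x)) (FImp (FRbox (S x) (S (S x))) (ST22 F1 (S (S x))))))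
  | MDia F1 =>
      FAll (S x) (FImp (FR x (S x))
        (FEx (S (S x)) (FAnd (FRdia (S x) (S (S x))) (ST22 F1 (S (S x))))))
  end.

(* A subset A of (U1 x U2) u (U2 x U1) is represented by its two components
   A12 : U1 -> U2 -> Prop and A21 : U2 -> U1 -> Prop; likewise for B.
   [asim_dir Th Mi Mj Aij Aji Bij] states the defining clauses for a in U_i, b in U_j. *)
Definition asim_dir (Th : nat -> Prop) (Mi Mj : model)
  (Aij : U Mi -> U Mj -> Prop) (Aji : U Mj -> U Mi -> Prop)
  (Bij : U Mi -> U Mj -> Prop) : Prop :=
  (forall a b n, Th n -> Aij a b -> Pm Mi n a -> Pm Mj n b) /\
  (forall a b d, Aij a b -> Rm Mj b d ->
     exists c, Rm Mi a c /\ Aij c d /\ Aji d c) /\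
  (forall a b d f, Aij a b -> Rm Mj b d -> Rbox Mj d f ->
     exists c e, Rm Mi a c /\ Rbox Mi c e /\ Aij e f) /\
  (forall a b d, Aij a b -> Rm Mj b d ->
     exists c, Rm Mi a c /\ Bij c d) /\
  (forall a b c, Bij a b -> Rdia Mi a c ->
     exists d, Rdia Mj b d /\ Aij c d).

Definition asim22 (Th : nat -> Prop) (M1 M2 : model) (t : U M1) (u : U M2)
  (A12 : U M1 -> U M2 -> Prop) (A21 : U M2 -> U M1 -> Prop)
  (B12 : U M1 -> U M2 -> Prop) (B21 : U M2 -> U M1 -> Prop) : Prop :=
  A12 t u /\
  asim_dir Th M1 M2 A12 A21 B12 /\
  asim_dir Th M2 M1 A21 A12 B21.

(* Invariance of phi(x) w.r.t. (2,2)-modal asimulations.  Theta ranges over sets of unary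
   predicate indices; R, R_box, R_dia are always in Theta.  Sigma_phi subset Theta. *)
Definition invariant22 (f : fo) (x : nat) : Prop :=
  forall (Th : nat -> Prop), (forall n, occursP n f -> Th n) ->
  forall (M1 M2 : model) (t : U M1) (u : U M2)
         (A12 : U M1 -> U M2 -> Prop) (A21 : U M2 -> U M1 -> Prop)
         (B12 : U M1 -> U M2 -> Prop) (B21 : U M2 -> U M1 -> Prop),
  asim22 Th M1 M2 t u A12 A21 B12 B21 ->
  forall (a : U M1) (b : U M2), A12 a b -> sat_at M1 a f x -> sat_at M2 b f x.

(* Main.v *)
Require Import Defs.
From Stdlib Require Import Arith Lia.

Definition modP (M : model) (Q : nat -> Prop) : model :=
  Model (U M) (Rm M) (Rbox M) (Rdia M) (fun n a => Q n -> Pm M n a).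

Lemma sat_modP : forall f (Q : nat -> Prop) (M : model) (g : nat -> U M),
  (forall n, occursP n f -> Q n) -> (sat M g f <-> sat (modP M Q) g f).
Proof.
  induction f; intros Q M g HQ; simpl in *.
  - tauto.
  - tauto.
  - tauto.
  - split; [intros H _; exact H | intros H; apply H, HQ; reflexivity].
  - tauto.
  - tauto.
  - rewrite (IHf Q M g HQ). tauto.
  - rewrite (IHf1 Q M g), (IHf2 Q M g) by (intros; apply HQ; tauto). tauto.
  - rewrite (IHf1 Q M g), (IHf2 Q M g) by (intros; apply HQ; tauto). tauto.
  - rewrite (IHf1 Q M g), (IHf2 Q M g) by (intros; apply HQ; tauto). tauto.
  - split; intros H a; specialize (H a); apply (IHf Q M (upd g n a) HQ); exact H.
  - split; intros [a H]; exists a; apply (IHf Q M (upd g n a) HQ); exact H.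
Qed.

Lemma eqb_Sn : forall x, Nat.eqb x (S x) = false.
Proof. intros; apply Nat.eqb_neq; lia. Qed.
Lemma eqb_SSn : forall x, Nat.eqb x (S (S x)) = false.
Proof. intros; apply Nat.eqb_neq; lia. Qed.
Lemma eqb_SnSSn : forall x, Nat.eqb (S x) (S (S x)) = false.
Proof. intros; apply Nat.eqb_neq; lia. Qed.

Lemma key : forall I (M N : model) A AR B B',
  asim_dir (fun _ => True) M N A AR B -> asim_dir (fun _ => True) N M AR A B' ->
  forall v (g : nat -> U M) (h : nat -> U N), A (g v) (h v) ->
  sat M g (ST22 I v) -> sat N h (ST22 I v).
Proof.
  induction I; intros M N A AR B B' D1 D2 v g h Hab; simpl.
  - pose proof D1 as [P _]. intros; eapply P; eauto.
  - tauto.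
  - intros [H1 H2]; split; eauto.
  - intros [H1|H2]; [left|right]; eauto.
  - intros H d Hr H1.
    unfold upd in *; simpl in *. rewrite Nat.eqb_refl, eqb_Sn in *.
    pose proof D1 as (_ & C2 & _).
    destruct (C2 _ _ _ Hab Hr) as (c & Hac & Acd & Adc).
    specialize (H c). simpl in H. unfold upd in H. rewrite ?Nat.eqb_refl, ?eqb_Sn, ?eqb_SnSSn in H.
    specialize (H Hac).
    assert (E1 : sat M (upd g (S v) c) (ST22 I1 (S v))).
    { eapply (IHI1 N M AR A B' B D2 D1 (S v) (upd h (S v) d)); unfold upd;
      rewrite ?Nat.eqb_refl; eauto. }
    unfold upd in E1. specialize (H E1).
    eapply (IHI2 M N A AR B B' D1 D2 (S v) (upd g (S v) c)); unfold upd;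
      rewrite ?Nat.eqb_refl; eauto.
  - intros H d Hr f Hbox.
    unfold upd in *; simpl in *. rewrite ?Nat.eqb_refl, ?eqb_Sn, ?eqb_SnSSn in *.
    pose proof D1 as (_ & _ & C3 & _).
    destruct (C3 _ _ _ _ Hab Hr Hbox) as (c & e & Hac & Hce & Aef).
    specialize (H c). simpl in H. unfold upd in H. rewrite ?Nat.eqb_refl, ?eqb_Sn, ?eqb_SnSSn in H.
    specialize (H Hac e). rewrite ?Nat.eqb_refl, ?eqb_SnSSn in H.
    specialize (H Hce).
    eapply (IHI M N A AR B B' D1 D2 (S (S v))); [|exact H].
    unfold upd; rewrite ?Nat.eqb_refl; exact Aef.
  - intros H d Hr.
    unfold upd in *; simpl in *. rewrite ?Nat.eqb_refl, ?eqb_Sn in *.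
    pose proof D1 as (_ & _ & _ & C4 & C5).
    destruct (C4 _ _ _ Hab Hr) as (c & Hac & Bcd).
    specialize (H c). simpl in H. unfold upd in H. rewrite ?Nat.eqb_refl, ?eqb_Sn, ?eqb_SnSSn in H.
    destruct (H Hac) as (z & Hz1 & Hz2).
    rewrite ?Nat.eqb_refl, ?eqb_SnSSn in Hz1.
    destruct (C5 _ _ _ Bcd Hz1) as (w & Hdw & Azw).
    exists w. rewrite ?Nat.eqb_refl, ?eqb_SnSSn. split; [exact Hdw|].
    eapply (IHI M N A AR B B' D1 D2 (S (S v))); [|exact Hz2].
    unfold upd; rewrite ?Nat.eqb_refl; exact Azw.
Qed.

Lemma dir_mod : forall (Th Q : nat -> Prop) M N A AR B,
  (forall n, Q n -> Th n) ->
  asim_dir Th M N A AR B -> asim_dir (fun _ => True) (modP M Q) (modP N Q) A AR B.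
Proof.
  intros Th Q M N A AR B HQ (C1 & C2 & C3 & C4 & C5).
  split; [|exact (conj C2 (conj C3 (conj C4 C5)))].
  simpl. intros a b n _ Hab H Hq. eapply C1; eauto.
Qed.

Theorem corollary2 (phi : fo) (x : nat) :
  only_free phi x ->
  (exists I : mi, log_equiv phi (ST22 I x)) ->
  invariant22 phi x.
Proof.
  intros _ [I HI] Th HTh M1 M2 t u A12 A21 B12 B21 (_ & D1 & D2) a b Hab Ha g2 Hg2.
  set (Q := fun n => occursP n phi).
  apply (sat_modP phi Q M2 g2 (fun n h => h)).
  apply HI.
  pose (g1 := fun _ : nat => a).
  assert (S1 : sat M1 g1 phi) by (apply Ha; reflexivity).
  apply (sat_modP phi Q M1 g1 (fun n h => h)) in S1.
  apply HI in S1.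
  eapply (key I (modP M1 Q) (modP M2 Q) A12 A21 B12 B21
            (dir_mod Th Q _ _ _ _ _ HTh D1) (dir_mod Th Q _ _ _ _ _ HTh D2) x g1 g2);
    [|exact S1].
  simpl. unfold g1. rewrite Hg2. exact Hab.
Qed.
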